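(* In any execution of the algorithm described in the context on a camera object $S$ and an associated versioned CAS object $O$ (after $O$'s constructor has completed), once a VNode is in the version list of $O$, it remains in the version list forever.
   Context: Camera $S$ has an integer field timestamp, initially 0; takeSnapshot(): read $t:=S.\mathit{timestamp}$, perform CAS$(S.\mathit{timestamp},t,t+1)$, return $t$. A VNode has fields val and nextv (both immutable after creation) and ts (an integer or special value TBD, initially TBD). Versioned CAS object $O$ has a field $\mathit{VHead}$. Constructor with value $v$: $\mathit{VHead}:=$ new VNode(val $v$, nextv NULL); initTS($\mathit{VHead}$). initTS($n$): if $n.ts=$TBD, read $c:=S.\mathit{timestamp}$ and CAS$(n.ts,\mathrm{TBD},c)$. readSnapshot($ts$): $node:=\mathit{VHead}$; initTS($node$); while $node.ts>ts$, $node:=node.nextv$; return $node.val$. vRead(): $h:=\mathit{VHead}$; initTS($h$); return $h.val$. vCAS(oldV,newV): $h:=\mathit{VHead}$; initTS($h$); if $h.val\neq$ oldV return false; if newV $=$ oldV return true; $m:=$ new VNode(val newV, nextv $h$); if CAS$(\mathit{VHead},h,m)$ succeeds, initTS($m$) and return true; else delete $m$, call initTS on the current value of $\mathit{VHead}$, return false. The version list of $O$ is the list obtained by starting at the VNode pointed to by $\mathit{VHead}$ and following nextv pointers; its head is the VNode pointed to by $\mathit{VHead}$. *)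

(* Defs.v *)
(* Operational (interleaving) semantics of the camera / versioned-CAS
   algorithm; every step is one atomic shared-memory access of one process
   (purely local work and reads of immutable fields are merged into steps). *)
From mathcomp Require Import ssreflect ssrbool eqtype ssrnat.

Set Implicit Arguments.
Unset Strict Implicit.

(* A VNode: val and nextv immutable, ts = None encodes TBD.
   VNodes are identified by their address (a nat). *)
Record vnode (V : Type) := VNode { val : V; nextv : option nat; ts : option nat }.

(* what to do after an initTS(n) call returns *)
Inductive cont (V : Type) :=
| K_ctor
| K_rs (t : nat)              (* readSnapshot(t): start the traversal *)
| K_vread                     (* vRead: return h.val *)
| K_vcas (oldV newV : V)      (* vCAS: compare h.val with oldV, ... *)
| K_true                      (* vCAS: return true *)
| K_false.                    (* vCAS: return false *)

Inductive pc (V : Type) :=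
| Idle
| TS_read                               (* takeSnapshot: t := S.timestamp *)
| TS_cas (t : nat)                      (* takeSnapshot: CAS(S.timestamp,t,t+1) *)
| IT_check (n : nat) (k : cont V)       (* initTS(n): test n.ts = TBD *)
| IT_read (n : nat) (k : cont V)        (* initTS(n): c := S.timestamp *)
| IT_cas (n c : nat) (k : cont V)       (* initTS(n): CAS(n.ts,TBD,c) *)
| Ret (n : nat) (k : cont V)            (* initTS(n) has returned *)
| RS_loop (n t : nat)                   (* readSnapshot: while node.ts > t ... *)
| VC_cas (h m : nat)                    (* vCAS: CAS(VHead,h,m) *)
| VC_reread.                            (* vCAS: initTS(current VHead) *)

Arguments Idle {V}. Arguments TS_read {V}. Arguments TS_cas {V}.
Arguments RS_loop {V}. Arguments VC_cas {V}. Arguments VC_reread {V}.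
Arguments K_ctor {V}. Arguments K_rs {V}. Arguments K_vread {V}.
Arguments K_true {V}. Arguments K_false {V}.

(* global state: the camera field, the field VHead of O (None before the
   constructor writes it), the heap of VNodes (None = unallocated/deleted),
   the next fresh address, the local state of every process (processes are
   indexed by nat), and whether the constructor has started / completed. *)
Record state (V : Type) := St {
  timestamp : nat;
  vhead : option nat;
  heap : nat -> option (vnode V);
  fresh : nat;
  pcs : nat -> pc V;
  ctor_started : bool;
  constructed : bool }.

Definition upd {A : Type} (f : nat -> A) (x : nat) (v : A) : nat -> A :=
  fun y => if y == x then v else f y.

Definition init_state (V : Type) : state V :=
  St 0 None (fun _ => None) 0 (fun _ => Idle) false false.

Section Ops.
Context {V : Type}.
Definition set_pc (s : state V) p c :=
  St (timestamp s) (vhead s) (heap s) (fresh s) (upd (pcs s) p c) (ctor_started s) (constructed s).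
Definition set_timestamp (s : state V) t :=
  St t (vhead s) (heap s) (fresh s) (pcs s) (ctor_started s) (constructed s).
Definition set_vhead (s : state V) h :=
  St (timestamp s) (Some h) (heap s) (fresh s) (pcs s) (ctor_started s) (constructed s).
Definition set_node (s : state V) n (o : option (vnode V)) :=
  St (timestamp s) (vhead s) (upd (heap s) n o) (fresh s) (pcs s) (ctor_started s) (constructed s).
Definition alloc (s : state V) (nd : vnode V) :=
  St (timestamp s) (vhead s) (upd (heap s) (fresh s) (Some nd)) (fresh s).+1
     (pcs s) (ctor_started s) (constructed s).
Definition set_ctor_started (s : state V) :=
  St (timestamp s) (vhead s) (heap s) (fresh s) (pcs s) true (constructed s).
Definition set_constructed (s : state V) :=
  St (timestamp s) (vhead s) (heap s) (fresh s) (pcs s) (ctor_started s) true.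
End Ops.

Inductive pstep {V : eqType} (p : nat) : state V -> state V -> Prop :=
| st_ts_invoke s : pcs s p = Idle -> pstep p s (set_pc s p TS_read)
| st_ts_read s : pcs s p = TS_read -> pstep p s (set_pc s p (TS_cas (timestamp s)))
| st_ts_cas_ok s t : pcs s p = TS_cas t -> timestamp s = t ->
    pstep p s (set_pc (set_timestamp s t.+1) p Idle)
| st_ts_cas_fail s t : pcs s p = TS_cas t -> timestamp s <> t ->
    pstep p s (set_pc s p Idle)
| st_ctor s (v : V) : ctor_started s = false -> pcs s p = Idle ->
    pstep p s (set_pc (set_ctor_started (set_vhead (alloc s (VNode v None None)) (fresh s)))
                      p (IT_check (fresh s) K_ctor))
| st_rs_invoke s t h : constructed s = true -> pcs s p = Idle -> vhead s = Some h ->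
    pstep p s (set_pc s p (IT_check h (K_rs t)))
| st_vread_invoke s h : constructed s = true -> pcs s p = Idle -> vhead s = Some h ->
    pstep p s (set_pc s p (IT_check h K_vread))
| st_vcas_invoke s h (oldV newV : V) : constructed s = true -> pcs s p = Idle -> vhead s = Some h ->
    pstep p s (set_pc s p (IT_check h (K_vcas oldV newV)))
| st_it_check_done s n k nd x : pcs s p = IT_check n k -> heap s n = Some nd -> ts nd = Some x ->
    pstep p s (set_pc s p (Ret n k))
| st_it_check_tbd s n k nd : pcs s p = IT_check n k -> heap s n = Some nd -> ts nd = None ->
    pstep p s (set_pc s p (IT_read n k))
| st_it_read s n k : pcs s p = IT_read n k ->
    pstep p s (set_pc s p (IT_cas n (timestamp s) k))
| st_it_cas_ok s n c k nd : pcs s p = IT_cas n c k -> heap s n = Some nd -> ts nd = None ->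
    pstep p s (set_pc (set_node s n (Some (VNode (val nd) (nextv nd) (Some c)))) p (Ret n k))
| st_it_cas_fail s n c k nd x : pcs s p = IT_cas n c k -> heap s n = Some nd -> ts nd = Some x ->
    pstep p s (set_pc s p (Ret n k))
| st_ctor_done s n : pcs s p = Ret n K_ctor ->
    pstep p s (set_pc (set_constructed s) p Idle)
| st_rs_start s n t : pcs s p = Ret n (K_rs t) -> pstep p s (set_pc s p (RS_loop n t))
| st_rs_next s n t nd x b : pcs s p = RS_loop n t -> heap s n = Some nd ->
    ts nd = Some x -> t < x -> nextv nd = Some b ->
    pstep p s (set_pc s p (RS_loop b t))
| st_rs_return s n t nd : pcs s p = RS_loop n t -> heap s n = Some nd ->
    ~ (exists x b, ts nd = Some x /\ t < x /\ nextv nd = Some b) ->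
    pstep p s (set_pc s p Idle)
| st_vread_return s n nd : pcs s p = Ret n K_vread -> heap s n = Some nd ->
    pstep p s (set_pc s p Idle)
| st_vcas_neq s n oldV newV nd : pcs s p = Ret n (K_vcas oldV newV) -> heap s n = Some nd ->
    val nd != oldV -> pstep p s (set_pc s p Idle)
| st_vcas_same s n oldV newV nd : pcs s p = Ret n (K_vcas oldV newV) -> heap s n = Some nd ->
    val nd = oldV -> newV = oldV -> pstep p s (set_pc s p Idle)
| st_vcas_alloc s n oldV newV nd : pcs s p = Ret n (K_vcas oldV newV) -> heap s n = Some nd ->
    val nd = oldV -> newV <> oldV ->
    pstep p s (set_pc (alloc s (VNode newV (Some n) None)) p (VC_cas n (fresh s)))
| st_vcas_cas_ok s h m : pcs s p = VC_cas h m -> vhead s = Some h ->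
    pstep p s (set_pc (set_vhead s m) p (IT_check m K_true))
| st_vcas_cas_fail s h m : pcs s p = VC_cas h m -> vhead s <> Some h ->
    pstep p s (set_pc (set_node s m None) p VC_reread)
| st_vcas_reread s h : pcs s p = VC_reread -> vhead s = Some h ->
    pstep p s (set_pc s p (IT_check h K_false))
| st_vcas_true s n : pcs s p = Ret n K_true -> pstep p s (set_pc s p Idle)
| st_vcas_false s n : pcs s p = Ret n K_false -> pstep p s (set_pc s p Idle).

Definition step {V : eqType} (s s' : state V) : Prop := exists p, pstep p s s'.

Inductive steps {V : eqType} : state V -> state V -> Prop :=
| steps_refl s : steps s s
| steps_cons s1 s2 s3 : step s1 s2 -> steps s2 s3 -> steps s1 s3.

Inductive reach {V : Type} (hp : nat -> option (vnode V)) : nat -> nat -> Prop :=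
| reach_here a : reach hp a a
| reach_next a b n nd : hp a = Some nd -> nextv nd = Some b -> reach hp b n -> reach hp a n.

Definition in_version_list {V : Type} (s : state V) (n : nat) : Prop :=
  exists h, vhead s = Some h /\ reach (heap s) h n.

(* Main.v *)
Require Import Defs.
From mathcomp Require Import ssreflect ssrbool eqtype ssrnat.
From mathcomp Require Import zify.
From Stdlib Require Import Lia.

Set Implicit Arguments.
Section S.
Variable V : eqType.

Definition node_in (c : pc V) (a : nat) : Prop :=
  match c with
  | IT_check n _ | IT_read n _ | IT_cas n _ _ | Ret n _ | RS_loop n _ => n = a
  | VC_cas h m => h = a \/ m = a
  | _ => False
  end.

Definition Inv (s : state V) : Prop :=
  (forall a, fresh s <= a -> heap s a = None) /\
  (forall h, vhead s = Some h -> h < fresh s) /\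
  (forall a nd b, heap s a = Some nd -> nextv nd = Some b -> b < fresh s) /\
  (forall p a, node_in (pcs s p) a -> a < fresh s) /\
  (forall q h m, pcs s q = VC_cas h m ->
     (exists nd, heap s m = Some nd /\ nextv nd = Some h) /\ vhead s <> Some m /\
     (forall a nd, heap s a = Some nd -> nextv nd <> Some m) /\
     (forall p, p <> q -> ~ node_in (pcs s p) m)) /\
  (ctor_started s = false -> constructed s = false /\ vhead s = None /\ forall p a, ~ node_in (pcs s p) a).

Lemma inv_init : Inv (init_state V).
Proof. rewrite /Inv /init_state /=; repeat split => //; by move=> *. Qed.

Lemma upd_inv {A : Type} (f : nat -> A) x v y w : upd f x v y = w -> (y = x /\ v = w) \/ (y <> x /\ f y = w).
Proof. rewrite /upd; case: eqP; auto. Qed.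

Lemma node_in_upd (f : nat -> pc V) x c q a : node_in (upd f x c q) a -> (q = x /\ node_in c a) \/ (q <> x /\ node_in (f q) a).
Proof. rewrite /upd; case: eqP; auto. Qed.

Ltac simp := repeat match goal with
 | H : upd _ _ _ _ = _ |- _ => apply upd_inv in H; destruct H as [[? ?]|[? ?]]; subst
 | H : node_in (upd _ _ _ _) _ |- _ => apply node_in_upd in H; destruct H as [[? ?]|[? ?]]; subst
 | H : Some _ = Some _ |- _ => injection H; clear H; intros; subst
 | H : ?a = ?a |- _ => clear H
 | |- context [ upd _ ?x _ ?y ] => rewrite /upd; case: (@eqP _ y x) => ?; subst
 | H : node_in (_ _) _ |- _ => progress (simpl in H)
 | H : _ \/ _ |- _ => destruct H
 | H : exists _, _ |- _ => destruct H
 | H : _ /\ _ |- _ => destruct H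
 end.

Ltac fin := repeat (match goal with
 | |- _ /\ _ => split
 | |- forall _, _ => intro
 | |- ~ _ => intro
 | H : Some _ = Some _ |- _ => injection H; clear H; intros; subst
 | H : ?a = ?a |- _ => clear H
 | H : VC_cas _ _ = VC_cas _ _ |- _ => injection H; clear H; intros; subst
 | |- context [ if ?y == ?x then _ else _ ] => case: (@eqP _ y x) => ?; subst
 | H : context [ if ?y == ?x then _ else _ ] |- _ => move: H; case: (@eqP _ y x) => ?; subst => H
 | H : node_in (_ _) _ |- _ => progress (simpl in H)
 | H : _ \/ _ |- _ => destruct H
 | H : exists _, _ |- _ => destruct H
 | H : _ /\ _ |- _ => destruct H
 end; try discriminate).

Definition done_ (P : Prop) := P.

Ltac pre := repeat match goal with
 | H : pcs ?s ?x = ?c, F4 : forall p a, node_in (pcs ?s p) a -> _ |- _ =>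
     let L := fresh "L" in
     assert (L : forall a, node_in c a -> a < fresh s) by (intro; rewrite -H; apply: F4);
     simpl in L;
     (try (match type of L with forall a, ?n = a \/ ?m = a -> _ =>
        generalize (L n (or_introl (Logic.eq_refl n))); generalize (L m (or_intror (Logic.eq_refl m))) end));
     (try (match type of L with forall a, ?n = a -> _ => generalize (L n (Logic.eq_refl n)) end));
     clear L;
     (try (match c with VC_cas ?h ?m => match goal with P : forall q h m, _ |- _ =>
        generalize (P _ _ _ H) end end));
     change (done_ (pcs s x = c)) in H
 end; intros.

Lemma inv_step p s s' : Inv s -> pstep p s s' -> Inv s'.
Proof.
move=> HI H.
case: H HI => /=; intros; destruct HI as [F1 [F2 [F3 [F4 [P C]]]]];
rewrite /Inv /set_pc /set_node /alloc /set_vhead /set_timestamp /set_ctor_started /set_constructed /=;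
pre; rewrite /upd; fin; pre; fin; unfold done_ in *; simpl in *; subst;
try (solve [eauto | lia | congruence | eauto with arith]);
try (solve [match goal with H : _ |- False => solve [eapply H; eauto] end]);
fin;
try (solve [lia]);
try (solve [match goal with Z : ctor_started ?s = false -> _, H0 : ctor_started ?s = false, e : pcs ?s ?x = ?c |- _ =>
   exfalso; case: (Z H0) => _ [_ Hn]; apply: (Hn x); rewrite e /=; first [reflexivity | by left | by right] end]);
try (solve [match goal with Z : ctor_started ?s = false -> _, H0 : ctor_started ?s = false, e : vhead ?s = Some _ |- _ =>
   exfalso; case: (Z H0) => _ [Hn _]; congruence end]);
try (solve [match goal with Z : ctor_started ?s = false -> _, H0 : ctor_started ?s = false |- _ =>
   case: (Z H0) => [? [? ?]]; auto end]);
try (solve [match goal with H : vhead ?s = Some ?h |- _ => have := F2 _ H; lia end]);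
try (solve [match goal with H : heap ?s ?a = Some ?nd, H' : nextv ?nd = Some ?b |- _ => have := F3 _ _ _ H H'; lia end]);
try (solve [match goal with H : node_in (pcs ?s ?p) ?a |- _ => have := F4 _ _ H; lia end]);
try (solve [match goal with H7 : forall p, p <> ?q -> ~ node_in (pcs ?s p) ?m, e: pcs ?s ?x = ?c |- _ => exfalso;
   apply: (H7 x); [congruence | rewrite e /=; auto] end]);
try (solve [match goal with H: forall a nd, heap ?s a = Some nd -> nextv nd <> Some ?m, H0 : heap ?s ?a = Some ?nd, H1 : nextv ?nd = Some ?m |- _ => exact (H _ _ H0 H1) end]).
Qed.


Lemma reach_mono (hp hp' : nat -> option (vnode V)) a n : reach hp a n ->
  (forall x nd, hp x = Some nd -> exists nd', hp' x = Some nd' /\ nextv nd' = nextv nd) ->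
  reach hp' a n.
Proof.
elim=> [a0|a0 b n0 nd H1 H2 _ IH] Hm; first exact: reach_here.
have [nd' [H1' H2']] := Hm _ _ H1.
apply: (@reach_next _ hp' a0 b n0 nd') => //; first by rewrite H2'.
exact: IH.
Qed.

Lemma reach_del (hp : nat -> option (vnode V)) m a n : reach hp a n -> a <> m ->
  (forall x nd, hp x = Some nd -> nextv nd <> Some m) ->
  reach (upd hp m None) a n.
Proof.
elim=> [a0|a0 b n0 nd H1 H2 _ IH] Ham Hm; first exact: reach_here.
apply: (@reach_next _ _ a0 b n0 nd).
- by rewrite /upd; case: eqP.
- exact: H2.
- apply: IH => //; move=> E; subst; exact: (Hm _ _ H1 H2).
Qed.

Lemma vl_step p s s' n : Inv s -> constructed s = true -> pstep p s s' ->
  in_version_list s n -> in_version_list s' n.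
Proof.
move=> HI Hc H [h [Hh Hr]].
case: H HI Hc Hh Hr => /=; intros; destruct HI as [F1 [F2 [F3 [F4 [P Z]]]]];
rewrite /in_version_list /set_pc /set_node /alloc /set_vhead /set_timestamp /set_ctor_started /set_constructed /=;
try (solve [exists h; split => //]).
- by case: (Z e); rewrite Hc.
- exists h; split => //; eapply reach_mono; [exact Hr|] => x nd0 Hx.
  rewrite /upd; case: eqP => [E|_]; last by exists nd0.
  subst; rewrite e0 in Hx; case: Hx => <-; by eexists.
- exists h; split => //; eapply reach_mono; [exact Hr|] => x nd0 Hx.
  rewrite /upd; case: eqP => [E|_]; last by exists nd0.
  subst; by rewrite F1 in Hx.
- have [[nd [Hm Hn]] _] := P _ _ _ e.
  exists m; split => //; apply: (reach_next Hm Hn).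
  by rewrite Hh in e0; case: e0 => <-.
- have [_ [Hv [Hn _]]] := P _ _ _ e.
  exists h; split => //; apply: reach_del => // E; subst; by apply: Hv.
Qed.

Lemma inv_steps s s' : steps s s' -> Inv s -> Inv s'.
Proof.
elim=> // s1 s2 s3 [p Hp] _ IH H1; apply: IH; exact: (inv_step H1 Hp).
Qed.

Lemma constructed_step p (s s' : state V) : pstep p s s' -> constructed s = true -> constructed s' = true.
Proof. by case. Qed.

End S.

Theorem lemmaA1 (V : eqType) (s s' : state V) (n : nat) :
  steps (init_state V) s ->
  constructed s = true ->
  in_version_list s n ->
  steps s s' ->
  in_version_list s' n.
Proof.
move=> Hi Hc Hv Hs.
have HI := inv_steps Hi (inv_init V).
elim: Hs HI Hc Hv => // s1 s2 s3 [p Hp] _ IH HI Hc Hv.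
apply: IH.
- exact: (inv_step HI Hp).
- exact: (constructed_step Hp).
- exact: (vl_step HI Hc Hp).
Qed.
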